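(* In the allocation problem described in the context, let $\pi=(\pi_1,\ldots,\pi_n)$ be the agents' preference lists and let $a$ be a Pareto efficient allocation. Then there exist speed functions $\eta_1,\ldots,\eta_n$ such that the extended SG mechanism with these speeds and truthful bids $\pi$ produces exactly the allocation $a$.
   Context: There are $m$ distinct divisible goods; good $j$ is available in amount $q_j>0$. There are $n$ agents; agent $i$ is to receive a total of $r_i>0$, with $\sum_j q_j=\sum_i r_i$. An allocation is a family $a_{ij}\ge 0$ with $\sum_j a_{ij}=r_i$ and $\sum_i a_{ij}=q_j$; $a_{i*}=(a_{i1},\ldots,a_{im})$ is agent $i$'s share. Each agent $i$ has a preference list $\pi_i$, a permutation of the goods ($\pi_i(1)$ most preferred). Agent $i$ prefers $a_{i*}$ to $b_{i*}$, written $a_{i*}>_i b_{i*}$, if the leftmost nonzero coordinate of $(a_{i\pi_i(\ell)}-b_{i\pi_i(\ell)})_{\ell=1}^m$ is positive. An allocation $a$ is Pareto efficient if there is no allocation $b$ such that every agent $i$ has $b_{i*}=a_{i*}$ or $b_{i*}>_i a_{i*}$, and some agent $i$ has $b_{i*}>_i a_{i*}$. A speed function for agent $i$ is a nonnegative integrable function $\eta_i:[0,1]\to\mathbb{R}_{\ge 0}$ with $\int_0^1\eta_i(t)\,dt=r_i$. The extended SG mechanism with speeds $\eta_1,\ldots,\eta_n$: each agent $i$ bids a permutation $\sigma_i$ of the goods; over time $t\in[0,1]$, each agent $i$ receives, at rate $\eta_i(t)$, the good highest in $\sigma_i$ among those not yet exhausted (a good is exhausted when the total amount handed out equals $q_j$;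 several agents may receive a good simultaneously; upon exhaustion, agents receiving it switch to their next non-exhausted good). The resulting allocation records the total amount of each good each agent receives. *)

(* Defs.v *)
From HB Require Import structures.
From mathcomp Require Import all_boot all_order all_algebra all_fingroup.
From mathcomp Require Import all_classical all_reals all_analysis.
Set Implicit Arguments. Unset Strict Implicit. Unset Printing Implicit Defensive.
Import Order.TTheory GRing.Theory Num.Theory.
Local Open Scope classical_set_scope.
Local Open Scope ring_scope.

Section SG.
Variable R : realType.
Variables n m : nat.
(* agents are 'I_n, goods are 'I_m.
   A preference list / bid is a permutation s : {perm 'I_m}; s k is the good
   of rank k (rank 0 = most preferred). *)

Definition is_allocation (q : 'I_m -> R) (r : 'I_n -> R)
    (a : 'I_n -> 'I_m -> R) : Prop :=
  [/\ forall i j, 0 <= a i j,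
      forall i, \sum_(j < m) a i j = r i &
      forall j, \sum_(i < n) a i j = q j].

Definition lex_prefers (p : {perm 'I_m}) (x y : 'I_m -> R) : Prop :=
  exists l : 'I_m,
    (forall k : 'I_m, (k < l)%N -> x (p k) = y (p k)) /\ y (p l) < x (p l).

Definition pareto_efficient (q : 'I_m -> R) (r : 'I_n -> R)
    (pi : 'I_n -> {perm 'I_m}) (a : 'I_n -> 'I_m -> R) : Prop :=
  is_allocation q r a /\
  ~ (exists b : 'I_n -> 'I_m -> R,
       [/\ is_allocation q r b,
           forall i, (forall j, b i j = a i j) \/ lex_prefers (pi i) (b i) (a i) &
           exists i, lex_prefers (pi i) (b i) (a i)]).

Definition I01 : set R := [set` `[(0:R), 1]].
Definition I0t (t : R) : set R := [set` `[(0:R), t]].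

Definition speed_function (ri : R) (eta : R -> R) : Prop :=
  [/\ forall t, t \in `[0, 1] -> 0 <= eta t,
      (@lebesgue_measure R).-integrable I01 (EFin \o eta) &
      (\int[@lebesgue_measure R]_(t in I01) (eta t)%:E = ri%:E)%E].

(* c i j t = cumulative amount of good j received by agent i up to time t *)
Definition not_exhausted (q : 'I_m -> R) (c : 'I_n -> 'I_m -> R -> R)
    (j : 'I_m) (t : R) : bool :=
  \sum_(k < n) c k j t < q j.

Definition receives (q : 'I_m -> R) (c : 'I_n -> 'I_m -> R -> R)
    (s : {perm 'I_m}) (j : 'I_m) (t : R) : bool :=
  not_exhausted q c j t &&
  [forall k : 'I_m, not_exhausted q c k t ==> ((s^-1)%g j <= (s^-1)%g k)%N].

Definition SG_run (q : 'I_m -> R) (eta : 'I_n -> R -> R)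
    (sigma : 'I_n -> {perm 'I_m}) (c : 'I_n -> 'I_m -> R -> R) : Prop :=
  forall i j,
    (@lebesgue_measure R).-integrable I01
       (fun s => (eta i s * (receives q c (sigma i) j s)%:R)%:E) /\
    forall t, t \in `[0, 1] ->
      ((c i j t)%:E =
         \int[@lebesgue_measure R]_(s in I0t t)
            (eta i s * (receives q c (sigma i) j s)%:R)%:E)%E.

Definition SG_outcome (q : 'I_m -> R) (eta : 'I_n -> R -> R)
    (sigma : 'I_n -> {perm 'I_m}) (a : 'I_n -> 'I_m -> R) : Prop :=
  exists c : 'I_n -> 'I_m -> R -> R,
    SG_run q eta sigma c /\ forall i j, a i j = c i j 1.

End SG.

(* Main.v *)
Require Import Defs.
From HB Require Import structures.
From mathcomp Require Import all_boot all_order all_algebra all_fingroup.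
From mathcomp Require Import all_classical all_reals all_analysis.
From mathcomp Require Import lra measurable_realfun.
Import Order.TTheory GRing.Theory Num.Theory.
Local Open Scope classical_set_scope.
Local Open Scope ring_scope.

Lemma meas_itvI (R : realType) (a b t : R) : 0 <= a -> a <= b -> 0 <= t ->
  (@lebesgue_measure R) ([set` `[a, b[] `&` [set` `[0, t]]) =
  (Num.min (Num.max t a) b - a)%:E.
Proof.
move=> a0 ab t0.
have mD : measurable (I0t t) by exact: measurable_itv.
have [ta|ta2] := ltP t a.
  rewrite (_ : _ `&` _ = set0); last first.
    apply/seteqP; split => x //= []; rewrite !in_itv /= => /andP[ax _] /andP[_ xt]; lra.
  by rewrite measure0 min_l // subrr.
have [tb|bt] := ltP t b.
  rewrite (_ : _ `&` _ = [set` `[a, t]]); last first.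
    apply/seteqP; split => x /=; rewrite !in_itv /=.
      move=> [] /andP[ax _] /andP[_ xt]; apply/andP; split => //.
    move=> /andP[ax xt]; split; apply/andP; split => //; lra.
  rewrite lebesgue_measure_itv /= lte_fin.
  case: ltP => h; first by rewrite -EFinD.
  have -> : t = a by apply/eqP; rewrite eq_le h ta2.
  by rewrite subrr.
rewrite (_ : _ `&` _ = [set` `[a, b[]); last first.
  apply/seteqP; split => x /=; rewrite !in_itv /=.
    by move=> [].
  move=> /andP[ax xb]; split; apply/andP; split => //; lra.
rewrite lebesgue_measure_itv /= lte_fin.
case: ltP => h; first by rewrite -EFinD.
have -> : b = a by apply/eqP; rewrite eq_le h ab.
by rewrite subrr.
Qed.

Lemma integrable_Kind (R : realType) (K a b t : R) :
  (@lebesgue_measure R).-integrable [set` `[0, t]] (fun s => (K * \1_[set` `[a, b[] s)%:E).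
Proof.
suff H : (@lebesgue_measure R).-integrable [set` `[0, t]] (EFin \o (fun s => K * \1_[set` `[a, b[] s)) by exact: H.
apply: measurable_bounded_integrable.
- exact: measurable_itv.
- have := @lebesgue_measure_itv R `[0, t]; rewrite /= => ->. by case: ifP => _; rewrite ?ltry // -EFinD ltry.
- apply: (measurable_funM (f := cst K)); first exact: measurable_cst.
  by apply: measurable_indic; exact: measurable_itv.
- exists `|K|; split; first exact: num_real.
  move=> M hM x _ /=; rewrite normrM.
  apply: (le_trans _ (ltW hM)); rewrite -[leRHS]mulr1 ler_wpM2l //.
  by rewrite /indic; case: (_ \in _); rewrite ?normr1 ?normr0.
Qed.

Lemma int_Kind (R : realType) (K a b t : R) : 0 <= a -> a <= b -> 0 <= t ->
  (\int[@lebesgue_measure R]_(s in I0t t) (K * \1_[set` `[a,b[] s)%:E =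
   (K * (Num.min (Num.max t a) b - a))%:E)%E.
Proof.
move=> a0 ab t0.
have mD : measurable (I0t t) by exact: measurable_itv.
under eq_integral do rewrite EFinM.
rewrite integralZl //; last first.
  have h := @integrable_Kind R 1 a b t.
  apply: (eq_integrable _ _ _ _ h); first exact: measurable_itv.
  by move=> x _ /=; rewrite mul1r.
rewrite integral_indic //; try exact: measurable_itv.
have h := @meas_itvI R a b t a0 ab t0.
by rewrite /I0t; move: h => /= ->; rewrite -EFinM.
Qed.
Lemma memitv (R : realType) (a b s : R) : (s \in [set` `[a, b[]) = (a <= s < b).
Proof.
rewrite /in_mem /= /in_set /mkset asboolb /pred_of_itv /= subitvE /= bnd_simp.
by rewrite ?asboolb leBRight_ltBLeft ltBSide.
Qed.

Local Close Scope classical_set_scope.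

Lemma sum_ind_eq (R : realType) (T U : finType) (P : pred T) (h : T -> U) (c : T -> bool) :
  \sum_(u : U) \sum_(t in P) ((h t == u) && c t)%:R = \sum_(t in P) (c t)%:R :> R.
Proof.
rewrite exchange_big /=; apply: eq_bigr => t _.
rewrite (bigD1 (h t)) //= eqxx /= big1 ?addr0 // => u /negbTE hu.
by rewrite eq_sym hu.
Qed.

Lemma sum_ind_pt (R : realType) (T : finType) (P : pred T) (c : T -> bool) (g : T) :
  \sum_(t in P) (c t && (t == g))%:R = ((g \in P) && c g)%:R :> R.
Proof.
case: (boolP (g \in P)) => gP /=.
  rewrite (bigD1 g) //= eqxx andbT big1 ?addr0 // => t /andP[_ /negbTE ->].
  by rewrite andbF.
rewrite big1 // => t tP; case: eqP => [tg|]; last by rewrite andbF.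
by move: gP; rewrite -tg tP.
Qed.

Lemma small_pos (R : realType) (T : finType) (P : pred T) (F : T -> R) :
  (forall x, P x -> 0 < F x) -> exists2 e : R, 0 < e & forall x, P x -> e <= F x.
Proof.
move=> HF; exists (\big[Num.min/1]_(x | P x) F x).
  elim/big_rec: _ => // x e Px e0; rewrite lt_min e0 andbT; exact: HF.
move=> x Px; rewrite (bigD1 x) //=; by rewrite ge_min lexx.
Qed.

Definition rk (n m : nat) (pi : 'I_n -> {perm 'I_m}) (i : 'I_n) (g : 'I_m) : nat :=
  ((pi i)^-1)%g g.
Arguments rk {n m}.

Definition relb (R : realType) (n m : nat) (a : 'I_n -> 'I_m -> R)
  (pi : 'I_n -> {perm 'I_m}) (g' g : 'I_m) : bool :=
  [exists i, (0 < a i g) && (rk pi i g' < rk pi i g)%N].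
Arguments relb {R n m}.

Lemma iter_mul (T : Type) (f : T -> T) (x : T) (k j : nat) :
  iter k f x = x -> iter (k * j) f x = x.
Proof.
move=> hk; elim: j => [|j IH]; first by rewrite muln0.
by rewrite mulnS iterD IH hk.
Qed.

Lemma periodic_exists (m : nat) (f : 'I_m -> 'I_m) (g0 : 'I_m) :
  exists k1 k, (0 < k)%N /\ iter k f (iter k1 f g0) = iter k1 f g0.
Proof.
pose h (k : 'I_m.+1) := iter k f g0.
have [k1 [k2 [hne heq]]] : exists k1 k2 : 'I_m.+1, k1 <> k2 /\ h k1 = h k2.
  apply: contrapT => H.
  have inj : injective h.
    move=> x y hxy; apply: contrapT => hxy'; apply: H; by exists x, y.
  by move: (leq_card h inj); rewrite !card_ord ltnn.
have [lt12|lt21|e] := ltngtP k1 k2.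
- exists k1, (k2 - k1)%N; split; first by rewrite subn_gt0.
  by rewrite -iterD subnK ?(ltnW lt12) //.
- exists k2, (k1 - k2)%N; split; first by rewrite subn_gt0.
  by rewrite -iterD subnK ?(ltnW lt21) //.
- by case: hne; apply: val_inj.
Qed.

Lemma pareto_min (R : realType) (n m : nat) (q : 'I_m -> R) (r : 'I_n -> R)
  (pi : 'I_n -> {perm 'I_m}) (a : 'I_n -> 'I_m -> R) :
  pareto_efficient q r pi a -> forall X : {set 'I_m}, X != finset.set0 ->
  exists2 g, g \in X & forall g', g' \in X -> ~~ relb a pi g' g.
Proof.
move=> [alloc noimp] X X0.
apply: contrapT => H.
have Hall : forall g, g \in X -> exists2 g', g' \in X & relb a pi g' g.
  move=> g gX; apply: contrapT => H2; apply: H; exists g => // g' g'X.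
  by apply/negP => hr; apply: H2; exists g'.
case/set0Pn: X0 => g0 g0X.
pose f g := odflt g [pick g' in X | relb a pi g' g].
have fX : forall g, g \in X -> f g \in X /\ relb a pi (f g) g.
  move=> g gX; rewrite /f; case: pickP => [g' /andP[] //|H0].
  by case: (Hall g gX) => g' g'X hr; move: (H0 g'); rewrite g'X hr.
have [i0 _] : exists i0 : 'I_n, true.
  by case: (fX g0 g0X) => _ /existsP[i _]; exists i.
pose w g := odflt i0 [pick i | (0 < a i g) && (rk pi i (f g) < rk pi i g)%N].
have wX : forall g, g \in X -> 0 < a (w g) g /\ (rk pi (w g) (f g) < rk pi (w g) g)%N.
  move=> g gX; rewrite /w; case: pickP => [i /andP[] //|H0].
  by case: (fX g gX) => _ /existsP[i hi]; move: (H0 i); rewrite hi.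
have iterX : forall k x, x \in X -> iter k f x \in X.
  by move=> k x xX; elim: k => [//|k IH]; rewrite iterS; case: (fX _ IH).
pose per x := `[< exists k, (0 < k)%N /\ iter k f x = x >].
pose P := [set x in X | per x].
have inP : forall x, (x \in P) <-> (x \in X /\ exists k, (0 < k)%N /\ iter k f x = x).
  move=> x; rewrite inE; split.
    by move=> /andP[xX /asboolP hp].
  by move=> [xX hp]; rewrite xX; apply/asboolP.
have fP : forall x, x \in P -> f x \in P.
  move=> x /inP[xX [k [k0 hk]]]; apply/inP; split; first by case: (fX x xX).
  by exists k; split => //; rewrite -iterSr iterS hk.
have finj : forall x y, x \in P -> y \in P -> f x = f y -> x = y.
  move=> x y /inP[_ [k [k0 hk]]] /inP[_ [j [j0 hj]]] hxy.
  have e1 : iter (k * j) f x = x by exact: iter_mul.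
  have e2 : iter (j * k) f y = y by exact: iter_mul.
  rewrite mulnC in e1.
  have kj0 : (0 < j * k)%N by rewrite muln_gt0 j0 k0.
  rewrite -e1 -e2 -(prednK kj0) !iterSr hxy //.
have fsurj : forall x, x \in P -> exists2 y, y \in P & f y = x.
  move=> x xP; have /inP[xX [k [k0 hk]]] := xP.
  exists (iter k.-1 f x).
    apply/inP; split; first exact: iterX.
    exists k; split => //; rewrite -iterD addnC iterD hk //.
  by rewrite -iterS (prednK k0).
have [g1 g1P] : exists g1, g1 \in P.
  have [k1 [k [k0 hk]]] := @periodic_exists m f g0.
  exists (iter k1 f g0); apply/inP; split; first exact: iterX.
  by exists k.
have PX : forall x, x \in P -> x \in X by move=> x /inP[].
have [eps eps0 epsle] := @small_pos R 'I_m (mem P) (fun g => a (w g) g)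
   (fun g gP => (wX g (PX g gP)).1).
pose A i g : R := \sum_(g' in P) ((w g' == i) && (g' == g))%:R.
pose B i g : R := \sum_(g' in P) ((w g' == i) && (f g' == g))%:R.
pose b i g := a i g + eps * (B i g - A i g).
have Aval : forall i g, A i g = ((g \in P) && (w g == i))%:R.
  by move=> i g; rewrite /A sum_ind_pt.
have B0 : forall i g, 0 <= B i g by move=> i g; apply: sumr_ge0 => g' _; exact: ler0n.
have colA : forall g, \sum_i A i g = (g \in P)%:R.
  move=> g; rewrite /A (@sum_ind_eq R _ _ (mem P) w (fun t => t == g)).
  have := @sum_ind_pt R _ (mem P) (fun _ => true) g.
  by rewrite andbT => <-.
have colB : forall g, \sum_i B i g = (g \in P)%:R.
  move=> g; rewrite /B (@sum_ind_eq R _ _ (mem P) w (fun t => f t == g)).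
  case: (boolP (g \in P)) => gP.
    have [y yP fy] := fsurj g gP.
    rewrite (bigD1 y) //= fy eqxx big1 ?addr0 // => t /andP[tP ty].
    case: eqP => // ftg; exfalso; move/negP: ty; apply; apply/eqP.
    by apply: finj => //; rewrite ftg fy.
  rewrite big1 // => t tP; case: eqP => // ftg; exfalso.
  by move/negP: gP; apply; rewrite -ftg; apply: fP.
have rowA : forall i, \sum_g A i g = \sum_(t in P) (w t == i)%:R.
  move=> i; rewrite -(@sum_ind_eq R _ _ (mem P) id (fun t => w t == i)).
  by apply: eq_bigr => g _; apply: eq_bigr => t _; rewrite andbC.
have rowB : forall i, \sum_g B i g = \sum_(t in P) (w t == i)%:R.
  move=> i; rewrite -(@sum_ind_eq R _ _ (mem P) f (fun t => w t == i)).
  by apply: eq_bigr => g _; apply: eq_bigr => t _; rewrite andbC.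
have [bpos brow bcol] := alloc.
have balloc : is_allocation q r b.
  split.
  - move=> i g; rewrite /b mulrBr addrA subr_ge0 Aval.
    case: (boolP ((g \in P) && (w g == i))) => [/andP[gP /eqP wg]|_].
      rewrite mulr1; apply: (le_trans (epsle g gP)); rewrite wg lerDl.
      by apply: mulr_ge0; [exact: ltW|exact: B0].
    by rewrite mulr0; apply: addr_ge0; [exact: bpos|apply: mulr_ge0; [exact: ltW|exact: B0]].
  - move=> i; rewrite /b big_split /= -mulr_sumr sumrB rowA rowB subrr mulr0 addr0.
    exact: brow.
  - move=> g; rewrite /b big_split /= -mulr_sumr sumrB colA colB subrr mulr0 addr0.
    exact: bcol.
have lexi : forall i, [exists g, (g \in P) && (w g == i)] -> lex_prefers (pi i) (b i) (a i).
  move=> i /existsP[g2 /andP[g2P wg2]].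
  pose C x := [exists g', [&& g' \in P, w g' == i & f g' == x]].
  have Cx0 : C (f g2) by apply/existsP; exists g2; rewrite g2P wg2 eqxx.
  case: (arg_minnP (rk pi i) Cx0) => x Cx xmin.
  have A0 : forall y, (rk pi i y <= rk pi i x)%N -> A i y = 0.
    move=> y hy; rewrite Aval; case: (boolP ((y \in P) && (w y == i))) => // /andP[yP /eqP wy].
    exfalso; have Cfy : C (f y) by apply/existsP; exists y; rewrite yP wy !eqxx.
    have := xmin _ Cfy; have := (wX y (PX y yP)).2; rewrite wy => h1 h2.
    by move: (leq_trans hy h2); rewrite leqNgt h1.
  exists (((pi i)^-1)%g x); split.
    move=> k hk; rewrite /b.
    have rky : rk pi i (pi i k) = k by rewrite /rk permK.
    rewrite A0; last by rewrite rky ltnW.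
    suff -> : B i (pi i k) = 0 by rewrite subrr mulr0 addr0.
    apply: big1 => g' g'P; case: (boolP ((w g' == i) && (f g' == pi i k))) => // /andP[wg' /eqP fg'].
    exfalso; have Cy : C (pi i k) by apply/existsP; exists g'; rewrite g'P wg' fg' eqxx.
    by move: (xmin _ Cy); rewrite rky leqNgt hk.
  rewrite permKV /b A0 // subr0 ltrDl; apply: mulr_gt0 => //.
  case/existsP: Cx => g' /and3P[g'P wg' fg'].
  rewrite /B (bigD1 g') //= wg' fg' /=.
  by apply: (lt_le_trans ltr01); rewrite lerDl; apply: sumr_ge0 => t _; exact: ler0n.
apply: noimp; exists b; split => //.
  move=> i; case: (boolP [exists g, (g \in P) && (w g == i)]) => hi; first by right; exact: lexi.
  left => j; rewrite /b Aval.
  have -> : (j \in P) && (w j == i) = false.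
    by apply/negbTE; apply: contra hi => hj; apply/existsP; exists j.
  suff -> : B i j = 0 by rewrite subrr mulr0 addr0.
  apply: big1 => g' g'P; case: eqP => // wg'; exfalso; move/negP: hi; apply.
  by apply/existsP; exists g'; rewrite g'P wg' eqxx.
exists (w g1); apply: lexi; apply/existsP; exists g1; by rewrite g1P eqxx.
Qed.

Lemma layer_exists (R : realType) (n m : nat) (q : 'I_m -> R) (r : 'I_n -> R)
  (pi : 'I_n -> {perm 'I_m}) (a : 'I_n -> 'I_m -> R) :
  pareto_efficient q r pi a ->
  exists L : 'I_m -> nat, (forall g, (L g < m)%N) /\
    forall i g g', 0 < a i g -> (rk pi i g' < rk pi i g)%N -> (L g' < L g)%N.
Proof.
move=> hpe.
pose mins (X : {set 'I_m}) := [set g in X | [forall g' in X, ~~ relb a pi g' g]].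
pose Sx := fix Sx k := if k is k'.+1 then Sx k' :\: mins (Sx k') else [set: 'I_m].
have SxS : forall k, Sx k.+1 = Sx k :\: mins (Sx k) by [].
have decr1 : forall k, Sx k.+1 \subset Sx k by move=> k; rewrite SxS subsetDl.
have decr : forall k l, (k <= l)%N -> Sx l \subset Sx k.
  move=> k l; elim: l => [|l IH] kl.
    by move: kl; rewrite leqn0 => /eqP ->.
  case: (leqP k l) => hk; first exact: fintype.subset_trans (decr1 l) (IH hk).
  have -> : k = l.+1 by apply/eqP; rewrite eqn_leq kl hk.
  exact: subxx.
have card_le : forall k, (#|Sx k| <= m - k)%N.
  elim=> [|k IH]; first by rewrite subn0 /=; apply: (leq_trans (max_card _)); rewrite card_ord.
  case: (boolP (Sx k == finset.set0)) => [/eqP e|ne].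
    by rewrite SxS e finset.set0D cards0.
  have [g gX gmin] := @pareto_min R n m q r pi a hpe _ ne.
  have gm : g \in mins (Sx k) by rewrite inE gX; apply/forallP => g'; apply/implyP; exact: gmin.
  have lt : (#|Sx k.+1| < #|Sx k|)%N.
    apply: proper_card; rewrite SxS; apply/properP; split; first exact: subsetDl.
    by exists g => //; rewrite inE gm.
  rewrite subnS; move: IH lt; case: (m - k)%N => [|d]; first by rewrite leqn0 => /eqP ->.
  by move=> h1 h2; rewrite /=; rewrite -ltnS; exact: leq_trans h2 h1.
have Sm : forall g, g \notin Sx m.
  move=> g; apply/negP => gS; have := card_le m; rewrite subnn leqn0 cards_eq0 => /eqP e.
  by rewrite e inE in gS.
have exP : forall g : 'I_m, exists k, g \notin Sx k.+1.
  move=> g; have m0 : (0 < m)%N := leq_ltn_trans (leq0n g) (ltn_ord g).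
  by exists m.-1; rewrite prednK ?Sm.
pose L g := ex_minn (exP g).
have Lprop : forall g, g \in mins (Sx (L g)) /\ (L g < m)%N.
  move=> g; rewrite /L; case: ex_minnP => k hk kmin; split.
    have gk : g \in Sx k.
      case: k hk kmin => [|k] hk kmin; first by rewrite inE.
      by apply: contraT => h; move: (kmin _ h); rewrite ltnn.
    by move: hk; rewrite SxS inE gk andbT negbK.
  have m0 : (0 < m)%N := leq_ltn_trans (leq0n g) (ltn_ord g).
  have := kmin m.-1; rewrite prednK ?Sm // => h.
  by rewrite -(prednK m0) ltnS; exact: h.
exists L; split; first by move=> g; case: (Lprop g).
move=> i g g' ag rkg.
have [gm _] := Lprop g; have [g'm _] := Lprop g'.
rewrite ltnNge; apply/negP => hle.
have g'S : g' \in Sx (L g) by apply: (fintype.subsetP (decr _ _ hle)); move: g'm; rewrite inE => /andP[].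
move: gm; rewrite inE => /andP[_ /forallP /(_ g') /implyP /(_ g'S)].
by move/negP; apply; apply/existsP; exists i; rewrite ag rkg.
Qed.

Lemma pointwise (R : realType) (n m : nat) (a : 'I_n -> 'I_m -> R)
  (pi : 'I_n -> {perm 'I_m}) (L : 'I_m -> nat) (ms K : R) (ne : 'I_m -> bool)
  (ind : 'I_m -> R) (i : 'I_n) (j : 'I_m) :
  (forall i g, 0 <= a i g) ->
  (forall i g g', 0 < a i g -> (rk pi i g' < rk pi i g)%N -> (L g' < L g)%N) ->
  (forall g, ne g = (ms < (L g).+1%:R)) ->
  (forall g, ind g = (((L g)%:R <= ms) && (ms < (L g).+1%:R))%:R) ->
  (\sum_h (K * a i h) * ind h) *
    (ne j && [forall k, ne k ==> (rk pi i j <= rk pi i k)%N])%:R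
  = (K * a i j) * ind j.
Proof.
move=> apos lay neE indE.
have rkinj : forall g g', rk pi i g = rk pi i g' -> g = g'.
  move=> g g' h; apply: (@perm_inj _ ((pi i)^-1)%g); apply: val_inj; exact: h.
case: (boolP (ne j && _)) => [/andP[nej /forallP hall]|hrec].
  rewrite mulr1 (bigD1 j) //= big1 ?addr0 // => h hj.
  rewrite indE; case: (boolP (_ && _)) => [/andP[h1 h2]|]; last by rewrite mulr0.
  have [ah0|ahp] := eqVneq (a i h) 0; first by rewrite ah0 mulr0 mul0r.
  have ahpos : 0 < a i h by rewrite lt_def ahp apos.
  have neh : ne h by rewrite neE.
  have le := implyP (hall h) neh.
  have lt : (rk pi i j < rk pi i h)%N.
    rewrite ltn_neqAle le andbT; apply/negP => /eqP e.
    by move/negP: hj; apply; apply/eqP; apply: rkinj.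
  have Ljh := lay _ _ _ ahpos lt.
  move: nej; rewrite neE => nej.
  have : ((L h)%:R < (L j).+1%:R :> R) by exact: le_lt_trans h1 nej.
  by rewrite ltr_nat ltnS leqNgt Ljh.
rewrite mulr0; apply/esym.
rewrite indE; case: (boolP (_ && _)) => [/andP[h1 h2]|]; last by rewrite mulr0.
have [ah0|ahp] := eqVneq (a i j) 0; first by rewrite ah0 mulr0 mul0r.
have ahpos : 0 < a i j by rewrite lt_def ahp apos.
exfalso; move/negP: hrec; apply; rewrite neE h2 /=.
apply/forallP => k; apply/implyP; rewrite neE => hk.
rewrite leqNgt; apply/negP => lt.
have Lkj := lay _ _ _ ahpos lt.
have : ((L j)%:R < (L k).+1%:R :> R) by exact: le_lt_trans h1 hk.
by rewrite ltr_nat ltnS leqNgt Lkj.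
Qed.

Theorem theorem6 (R : realType) (n m : nat)
    (q : 'I_m -> R) (r : 'I_n -> R)
    (hq : forall j, 0 < q j) (hr : forall i, 0 < r i)
    (hsum : \sum_(j < m) q j = \sum_(i < n) r i)
    (pi : 'I_n -> {perm 'I_m}) (a : 'I_n -> 'I_m -> R)
    (ha : pareto_efficient q r pi a) :
  exists eta : 'I_n -> R -> R,
    (forall i, speed_function (r i) (eta i)) /\ SG_outcome q eta pi a.
Proof.
have [L [Lm lay]] := @layer_exists R n m q r pi a ha.
have [[apos arow acol] _] := ha.
pose M : R := m%:R.
pose al g : R := (L g)%:R / M.
pose be g : R := (L g).+1%:R / M.
pose ind g (s : R) : R := \1_[set` `[al g, be g[] s.
pose eta i (s : R) : R := \sum_g (M * a i g) * ind g s.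
pose c i g t := (M * a i g) * (Num.min (Num.max t (al g)) (be g) - al g).
have Mpos : forall g : 'I_m, 0 < M.
  by move=> g; rewrite ltr0n; exact: leq_ltn_trans (leq0n g) (ltn_ord g).
have al0 : forall g, 0 <= al g.
  by move=> g; rewrite /al divr_ge0 // ltW // (Mpos g).
have albe : forall g, al g <= be g.
  by move=> g; rewrite /al /be ler_pM2r ?invr_gt0 ?(Mpos g) // ler_nat.
have be1 : forall g, be g <= 1.
  by move=> g; rewrite /be ler_pdivrMr ?Mpos // mul1r ler_nat.
have Mal : forall g, M * al g = (L g)%:R.
  by move=> g; rewrite /al mulrC -mulrA mulVf ?mulr1 // gt_eqF ?Mpos.
have Mbe : forall g, M * be g = (L g).+1%:R.
  by move=> g; rewrite /be mulrC -mulrA mulVf ?mulr1 // gt_eqF ?Mpos.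
have intK : forall i g t, 0 <= t ->
  (\int[@lebesgue_measure R]_(s in I0t t) ((M * a i g) * ind g s)%:E = (c i g t)%:E)%E.
  by move=> i g t t0; apply: int_Kind.
have c1 : forall i g, c i g 1 = a i g.
  move=> i g; rewrite /c (max_l (le_trans (albe g) (be1 g))) (min_r (be1 g)).
  by rewrite mulrAC mulrBr Mbe Mal -natrB // subSnn mul1r.
have alltbe : forall g, al g < be g.
  by move=> g; rewrite /al /be ltr_pM2r ?invr_gt0 ?(Mpos g) // ltr_nat.
have neE : forall g s, not_exhausted q c g s = (M * s < (L g).+1%:R).
  move=> g s; rewrite /not_exhausted.
  have -> : \sum_k c k g s = q g * (M * (Num.min (Num.max s (al g)) (be g) - al g)).
    rewrite /c -acol mulr_suml; apply: eq_bigr => k _.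
    by rewrite [M * a k g]mulrC -mulrA.
  rewrite -[X in _ < X]mulr1 ltr_pM2l ?hq //.
  case: (ltP s (be g)) => h.
    have hm : Num.max s (al g) < be g by rewrite gt_max h alltbe.
    have h1 : M * s < (L g).+1%:R by rewrite -Mbe ltr_pM2l ?(Mpos g).
    rewrite h1 min_l ?(ltW hm) // mulrBr Mal ltrBlDr addrC natr1.
    by rewrite -Mbe ltr_pM2l ?(Mpos g).
  have hm : be g <= Num.max s (al g) by rewrite le_max h.
  rewrite min_r // mulrBr Mbe Mal -natrB // subSnn ltxx.
  by apply/esym/negbTE; rewrite -leNgt -Mbe ler_pM2l ?(Mpos g).
have indE : forall g s, ind g s = (((L g)%:R <= M * s) && (M * s < (L g).+1%:R))%:R.
  move=> g s; rewrite /ind indicE memitv /al /be.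
  by rewrite ler_pdivrMr ?(Mpos g) // ltr_pdivlMr ?(Mpos g) // ![s * M]mulrC.
have pw : forall i j s, eta i s * (receives q c (pi i) j s)%:R = (M * a i j) * ind j s.
  move=> i j s.
  exact: (@pointwise R n m a pi L (M * s) M (fun g => not_exhausted q c g s)
             (fun g => ind g s) i j apos lay (fun g => neE g s) (fun g => indE g s)).
have indpos : forall g s, 0 <= ind g s by move=> g s; rewrite indE ler0n.
have intKi : forall i g, (@lebesgue_measure R).-integrable (@I01 R)
    (fun s => ((M * a i g) * ind g s)%:E).
  by move=> i g; exact: integrable_Kind.
exists eta; split.
  move=> i; split.
  - move=> t _; apply: sumr_ge0 => g _; apply: mulr_ge0 => //.
    by apply: mulr_ge0; [exact: ler0n|exact: apos].
  - have H := @integrable_sum _ _ R (@lebesgue_measure R) (@I01 R) (measurable_itv _) 'I_m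
      (index_enum 'I_m) predT (fun g s => ((M * a i g) * ind g s)%:E) (fun g _ => intKi i g).
    apply: (eq_integrable _ _ _ _ H); first exact: measurable_itv.
    by move=> s _ /=; rewrite sumEFin.
  - have -> : (\int[@lebesgue_measure R]_(t in @I01 R) (eta i t)%:E =
        \int[@lebesgue_measure R]_(t in @I01 R) (\sum_g ((M * a i g) * ind g t)%:E))%E.
      by apply: eq_integral => s _; rewrite sumEFin.
    rewrite integral_sum. all: try (by move=> g; exact: intKi). all: try exact: measurable_itv.
    rewrite (eq_bigr (fun g => (a i g)%:E)); first by rewrite sumEFin arow.
    by move=> g _; rewrite (intK i g 1 ler01) c1.
exists c; split; last by move=> i j; rewrite c1.
move=> i j; split.
  apply: (eq_integrable _ _ _ _ (intKi i j)); first exact: measurable_itv.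
  by move=> s _ /=; rewrite pw.
move=> t ht.
have t0 : 0 <= t by move: ht; rewrite in_itv /= => /andP[].
rewrite -(intK i j t t0); apply: eq_integral => s _.
by rewrite pw.
Qed.
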